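(* Let $G'$ be a connected graph, let $w$ be a vertex of $G'$, let $k\ge 2$, and let $G$ be obtained from $G'$ by adding $k$ new vertices $1,\dots,k$, each adjacent only to $w$. Let $\Delta$ be the distance squared matrix of $G$, let $\Delta_k$ be the distance squared matrix of the graph $G\setminus\{1,\dots,k-1\}$ (that is, $G'$ with the single pendant vertex $k$ attached at $w$), and let $\mathbf e_k$ be the standard basis vector corresponding to vertex $k$ in the index set of $\Delta_k$. Then \[ i_-(\Delta)=k-1+i_-\!\left(\Delta_k+\left(4-\tfrac{4}{k}\right)\mathbf e_k\mathbf e_k^T\right). \]
   Context: For a connected graph $G$ with vertices $1,\dots,n$, the distance squared matrix $\Delta$ is the $n\times n$ matrix with $(i,j)$ entry $d_{ij}^2$, where $d_{ij}$ is the graph distance between $i$ and $j$. For a real symmetric matrix $M$, $i_-(M)$ denotes the number of negative eigenvalues of $M$ counted with multiplicity. *)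

(* Defs.v *)
From HB Require Import structures.
From mathcomp Require Import all_boot all_order all_algebra.
From mathcomp Require Import polyrcf.
Set Implicit Arguments. Unset Strict Implicit. Unset Printing Implicit Defensive.
Import Order.TTheory GRing.Theory Num.Theory.
Local Open Scope ring_scope.

(* A graph on a finite vertex type V is given by its adjacency relation e;
   it is a simple graph when e is symmetric and irreflexive. *)

Definition walkb (V : finType) (e : rel V) (x y : V) (n : nat) : bool :=
  [exists p : n.-tuple V, path e x p && (last x p == y)].

(* graph distance: the least n (< #|V|) such that a walk of length n from x
   to y exists; for connected graphs this is the usual distance d(x,y). *)
Definition gdist (V : finType) (e : rel V) (x y : V) : nat :=
  find (walkb e x y) (iota 0 #|V|).

Definition connected_graph (V : finType) (e : rel V) : Prop :=
  forall x y : V, connect e x y.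

Definition dsq_mx (R : pzRingType) (V : finType) (e : rel V) : 'M[R]_#|V| :=
  \matrix_(i, j) ((gdist e (enum_val i) (enum_val j)) ^ 2)%:R.

Definition neg_inertia (R : rcfType) (n : nat) (M : 'M[R]_n) : nat :=
  (\sum_(x <- rootsR (char_poly M) | (x < 0)%R) mup x (char_poly M))%N.

Definition add_pendants (V : finType) (e : rel V) (w : V) (k : nat)
  : rel (V + 'I_k)%type :=
  fun a b => match a, b with
             | inl x, inl y => e x y
             | inl x, inr _ => x == w
             | inr _, inl y => y == w
             | inr _, inr _ => false
             end.

Arguments add_pendants {V} e w k.
Arguments dsq_mx R {V} e.
Arguments neg_inertia {R n} M.
Arguments gdist {V} e x y.

(* Main.v *)
Require Import Defs.
From HB Require Import structures.
From mathcomp Require Import all_boot all_order all_algebra.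
From mathcomp Require Import polyrcf complex spectral sesquilinear.
From mathcomp Require Import zify ring lra.
Set Implicit Arguments. Unset Strict Implicit. Unset Printing Implicit Defensive.
Import Order.TTheory GRing.Theory Num.Theory.
Local Open Scope ring_scope.

Lemma iterop_add1 n : iterop n addn 1%N 0%N = n.
Proof. case: n => // n. rewrite /iterop. elim: n => //= n IH. rewrite IH. by []. Qed.

Lemma negcount (R : rcfType) (s : seq R) :
  (\sum_(x <- rootsR (\prod_(y <- s) ('X - y%:P)) | (x < 0)%R)
      mup x (\prod_(y <- s) ('X - y%:P)))%N = count (fun x => x < 0) s.
Proof.
set p := \prod_(y <- s) _.
have pn0 : p != 0 by rewrite monic_neq0 // monic_prod_XsubC.
have memr x : (x \in rootsR p) = (x \in s).
  by rewrite -(roots_on_rootsR pn0 x) in_itv /= root_prod_XsubC.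
have ur : uniq (rootsR p) by apply: uniq_roots.
under eq_bigr => x _ do rewrite mu_prod_XsubC.
have pe : perm_eq (rootsR p) (undup s).
  by apply: uniq_perm; rewrite ?undup_uniq // => x; rewrite mem_undup memr.
rewrite (perm_big _ pe) /=.
under eq_bigr => x _ do rewrite -[count_mem x s]iterop_add1.
by rewrite (big_undup_iterop_count addn) sum1_count.
Qed.

Section Spec.
Variable C : numClosedFieldType.
Local Open Scope sesquilinear_scope.

Definition qf n (H : 'M[C]_n) (x : 'rV[C]_n) : C := (x *m H *m x ^t*) 0 0.
Definition negdef n (H : 'M[C]_n) m (W : 'M[C]_(m, n)) :=
  forall x : 'rV_n, (x <= W)%MS -> x != 0 -> qf H x < 0.
Definition nonneg n (H : 'M[C]_n) m (S : 'M[C]_(m, n)) :=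
  forall x : 'rV_n, (x <= S)%MS -> 0 <= qf H x.

Lemma negdef_nonneg_rank n (H : 'M[C]_n) m1 m2 (W : 'M_(m1,n)) (S : 'M_(m2,n)) :
  negdef H W -> nonneg H S -> (\rank W + \rank S <= n)%N.
Proof.
move=> hW hS.
have cap0 : (W :&: S)%MS == 0.
  apply/rowV0P => v vin; apply/eqP; apply: contraT => vn0.
  have lt0 := hW v (submx_trans vin (capmxSl _ _)) vn0.
  by move: (hS v (submx_trans vin (capmxSr _ _))); rewrite (lt_geF lt0).
rewrite -mxrank_sum_cap (eqP cap0) mxrank0 addn0.
exact: rank_leq_col.
Qed.

Lemma rowsub1_tr m n (f : 'I_m -> 'I_n) : injective f ->
  rowsub f (1%:M : 'M[C]_n) *m (rowsub f 1%:M)^T = 1%:M.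
Proof.
move=> fi; apply/matrixP => r r'; rewrite mul_rowsub_mx !mxE.
rewrite (bigD1 (f r)) //= big1 ?addr0; last first.
  by move=> j /negPf hj; rewrite !mxE eq_sym hj mul0r.
by rewrite !mxE eqxx mul1r (inj_eq fi) eq_sym.
Qed.

Variables (n : nat) (U : 'M[C]_n) (d : 'rV[C]_n).
Hypotheses (Uu : U \is unitarymx) (dr : forall i, d 0 i \is Num.real).
Let H := U^t* *m diag_mx d *m U.

Lemma qf_spec x : qf H x =
  \sum_j d 0 j * ((x *m U^t*) 0 j * ((x *m U^t*) 0 j)^*).
Proof.
rewrite /qf /H.
have -> : x ^t* = U^t* *m (x *m U^t*)^t*.
  rewrite trmx_mul map_mxM trmxCK mulmxA.
  by have := mulmxKtV 1%:M Uu erefl; rewrite mul1mx => ->; rewrite mul1mx.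
rewrite !mulmxA -[x *m U^t* *m diag_mx d *m U *m U^t*]mulmxA.
rewrite (unitarymxP Uu) mulmx1 mul_mx_diag !mxE.
apply: eq_bigr => j _; rewrite !mxE; ring.
Qed.

Lemma rowsub_y (B : {set 'I_n}) (z : 'rV[C]_#|B|) j : j \notin B ->
  (z *m rowsub (fun r => enum_val r) U *m U^t*) 0 j = 0.
Proof.
move=> jB; rewrite rowsubE mulmxA mulmxtVK // !mxE big1 // => r _.
rewrite !mxE; case: eqP => [h|]; last by rewrite mulr0.
by move: jB; rewrite -h enum_valP.
Qed.

Let A := [set i | d 0 i < 0].

Lemma xU0 (x : 'rV[C]_n) : x != 0 -> exists j, (x *m U^t*) 0 j != 0.
Proof.
move=> xn0; apply/existsP; apply: contraR xn0 => /existsPn h.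
have y0 : x *m U^t* = 0 by apply/rowP => j; rewrite [RHS]mxE; apply/eqP/negbNE/h.
by rewrite -(mulmxKtV x Uu) // y0 mul0mx.
Qed.

Lemma spec_neg : exists2 N : 'M_(#|A|, n), negdef H N & (#|A| <= \rank N)%N.
Proof.
exists (rowsub (fun r => enum_val r) U).
  move=> x /submxP [z ->] xn0.
  have [j yj] := xU0 xn0.
  have jA : j \in A by apply: contraR yj => /(rowsub_y z) ->.
  rewrite qf_spec (bigD1 j) //=.
  rewrite -[X in _ < X](addr0 0) ltr_leD //.
    by rewrite pmulr_llt0 ?mul_conjC_gt0 //; move: jA; rewrite inE.
  apply: sumr_le0 => i _.
  case: (boolP (i \in A)) => iA; last by rewrite (rowsub_y z iA) mul0r mulr0.
  by apply: mulr_le0_ge0; [apply: ltW; rewrite inE in iA | apply: mul_conjC_ge0].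
apply: (mulmx1_min_rank (M:=1%:M) (N:=U^t* *m (rowsub (fun r => enum_val r) 1%:M)^T)).
by rewrite mul1mx mulmxA rowsubE mulmxtVK // rowsub1_tr //; apply: enum_val_inj.
Qed.

Lemma spec_nonneg : exists2 P : 'M_(#|~: A|, n), nonneg H P & (n - #|A| <= \rank P)%N.
Proof.
exists (rowsub (fun r => enum_val r) U).
  move=> x /submxP [z ->].
  rewrite qf_spec; apply: sumr_ge0 => i _.
  case: (boolP (i \in ~: A)) => iA; last by rewrite (rowsub_y z iA) mul0r mulr0.
  apply: mulr_ge0; last exact: mul_conjC_ge0.
  move: iA; rewrite !inE real_leNgt ?real0 //.
have -> : (n - #|A| = #|~: A|)%N by rewrite -[n in (n - _)%N]card_ord -(cardsC A) addKn.
apply: (mulmx1_min_rank (M:=1%:M) (N:=U^t* *m (rowsub (fun r => enum_val r) 1%:M)^T)).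
by rewrite mul1mx mulmxA rowsubE mulmxtVK // rowsub1_tr //; apply: enum_val_inj.
Qed.

Lemma negdef_le m (W : 'M_(m,n)) : negdef H W -> (\rank W <= #|A|)%N.
Proof.
move=> hW; have [P hP rP] := spec_nonneg.
have := negdef_nonneg_rank hW hP.
move: rP; have : (#|A| <= n)%N by rewrite -[n in (_ <= n)%N]card_ord max_card.
move: (\rank W) (\rank P) => a b; lia.
Qed.

Lemma nonneg_le m (S : 'M_(m,n)) : nonneg H S -> (\rank S <= n - #|A|)%N.
Proof.
move=> hS; have [N hN rN] := spec_neg.
have := negdef_nonneg_rank hN hS.
move: rN; move: (\rank N) (\rank S) => a b; lia.
Qed.

End Spec.

Lemma char_poly_conj (F : comNzRingType) n (Q P D : 'M[F]_n) :
  Q *m P = 1%:M -> char_poly (Q *m D *m P) = char_poly D.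
Proof.
move=> QP; rewrite /char_poly.
have -> : char_poly_mx (Q *m D *m P) =
   map_mx polyC Q *m char_poly_mx D *m map_mx polyC P.
  rewrite /char_poly_mx mulmxBr mulmxBl -!map_mxM.
  rewrite /char_poly_mx; congr (_ - _).
  by rewrite mul_mx_scalar -scalemxAl -map_mxM QP map_mx1 scalemx1.
rewrite !det_mulmx mulrC mulrA -det_mulmx -map_mxM.
rewrite (mulmx1C QP).
by rewrite map_mx1 det1 mul1r.
Qed.

Section RealC.
Variable R : rcfType.
Local Notation C := (R[i]).
Local Notation phi := (real_complex R).
Local Open Scope sesquilinear_scope.

Lemma phi_real (x : R) : phi x \is Num.real.
Proof. by apply/complex_realP; exists x. Qed.

Lemma conj_phi (x : R) : (phi x)^* = phi x.
Proof. by rewrite conj_Creal // phi_real. Qed.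

Lemma herm_phi n (A : 'M[R]_n) : A^T = A -> A ^ phi \is hermsymmx.
Proof.
move=> sA; apply: realsym_hermsym.
  by apply/is_hermitianmxP; rewrite expr0 scale1r map_mx_id // map_trmx sA.
by apply/mxOverP => i j; rewrite mxE phi_real.
Qed.

Definition nuC n (A : 'M[R]_n) := #|[set i | spectral_diag (map_mx phi A) 0 i < 0]|.

Lemma specA n (A : 'M[R]_n) : A^T = A ->
  map_mx phi A = (spectralmx (map_mx phi A))^t* *m diag_mx (spectral_diag (map_mx phi A))
     *m spectralmx (map_mx phi A).
Proof.
move=> sA; have /hermitian_normalmx/orthomx_spectralP := herm_phi sA.
by rewrite invmx_unitary // spectral_unitarymx.
Qed.

Lemma spec_real n (A : 'M[R]_n) : A^T = A ->
  forall i, spectral_diag (map_mx phi A) 0 i \is Num.real.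
Proof.
move=> sA i; have := hermitian_spectral_diag_real (herm_phi sA).
by move/mxOverP => /(_ 0 i).
Qed.

Lemma neg_inertia_nuC n (A : 'M[R]_n) : A^T = A -> neg_inertia A = nuC A.
Proof.
move=> sA; set d := spectral_diag (map_mx phi A).
pose r i := complex.Re (d 0 i).
have dr i : phi (r i) = d 0 i by rewrite RRe_real // spec_real.
have cpA : char_poly A = \prod_(y <- [seq r i | i <- enum 'I_n]) ('X - y%:P).
  apply: (@map_poly_inj _ _ phi).
  rewrite map_char_poly (specA sA) char_poly_conj; last first.
    by have := mulmxKtV 1%:M (spectral_unitarymx (map_mx phi A)) erefl; rewrite !mul1mx.
  rewrite char_poly_trig ?diag_mx_is_trig // rmorph_prod big_map big_enum /=.
  by apply: eq_bigr => i _; rewrite map_polyXsubC mxE eqxx mulr1n -[d 0 i]dr.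
rewrite /neg_inertia cpA negcount count_map /nuC cardE size_filter -enumT.
by apply: eq_count => i; rewrite /= inE -/d -dr -ltcR.
Qed.

Section Wrap.
Variables (n : nat) (A : 'M[R]_n).
Hypothesis sA : A^T = A.

Lemma nuC_negdef_le m (W : 'M_(m, n)) : negdef (map_mx phi A) W -> (\rank W <= nuC A)%N.
Proof.
rewrite (specA sA) => h; apply: (negdef_le (spectral_unitarymx _) _ h).
exact: spec_real.
Qed.

Lemma nuC_nonneg_le m (S : 'M_(m, n)) : nonneg (map_mx phi A) S -> (\rank S <= n - nuC A)%N.
Proof.
by rewrite (specA sA) => h; apply: (nonneg_le (spectral_unitarymx _) h).
Qed.

Lemma nuC_neg_ex : exists m, exists2 N : 'M_(m, n), negdef (map_mx phi A) N & (nuC A <= \rank N)%N.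
Proof.
have [N h1 h2] := spec_neg (spectral_diag (map_mx phi A)) (spectral_unitarymx (map_mx phi A)).
by exists _, N => //; move: h1; rewrite -(specA sA).
Qed.

Lemma nuC_nonneg_ex : exists m, exists2 P : 'M_(m, n), nonneg (map_mx phi A) P & (n - nuC A <= \rank P)%N.
Proof.
have [P h1 h2] := spec_nonneg (spectral_unitarymx (map_mx phi A)) (spec_real sA).
by exists _, P => //; move: h1; rewrite -(specA sA).
Qed.

Lemma nuC_le : (nuC A <= n)%N.
Proof. by rewrite /nuC -[n in (_ <= n)%N]card_ord max_card. Qed.
End Wrap.

Definition bil p q (H : 'M[C]_(p, q)) (x : 'rV[C]_p) (y : 'rV[C]_q) : C := (x *m H *m y^t*) 0 0.

Lemma tc_phi m n (B : 'M[R]_(m, n)) : (map_mx phi B)^t* = map_mx phi B^T.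
Proof. by apply/matrixP => i j; rewrite !mxE conj_phi. Qed.

Lemma bil_congr n m1 m2 (A : 'M[R]_n) (B1 : 'M[R]_(m1, n)) (B2 : 'M[R]_(m2, n)) u v :
  bil (map_mx phi A) (u *m map_mx phi B1) (v *m map_mx phi B2) =
  bil (map_mx phi (B1 *m A *m B2^T)) u v.
Proof.
by rewrite /bil trmx_mul map_mxM tc_phi !map_mxM !mulmxA.
Qed.

Lemma qf_bil n (H : 'M[C]_n) x : qf H x = bil H x x.
Proof. by []. Qed.

Lemma bilD n (H : 'M[C]_n) x y :
  qf H (x + y) = qf H x + qf H y + bil H x y + bil H y x.
Proof.
rewrite /qf /bil linearD /= map_mxD !mulmxDl !mulmxDr.
move: (x *m H *m x^t*) (y *m H *m y^t*) (x *m H *m y^t*) (y *m H *m x^t*) => a b c d'.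
rewrite !mxE; ring.
Qed.

Lemma bilZ n (H : 'M[C]_n) c x y : bil (c *: H) x y = c * bil H x y.
Proof. by rewrite /bil -scalemxAr -scalemxAl mxE. Qed.

Lemma qf1_ge0 n (x : 'rV[C]_n) : 0 <= qf 1%:M x.
Proof.
rewrite /qf mulmx1 mxE; apply: sumr_ge0 => j _; rewrite !mxE mul_conjC_ge0 //.
Qed.

Lemma qf1_gt0 n (x : 'rV[C]_n) : x != 0 -> 0 < qf 1%:M x.
Proof.
move=> xn0.
have [j xj] : exists j, x 0 j != 0.
  apply/existsP; apply: contraR xn0 => /existsPn h.
  by apply/eqP/rowP => j; rewrite [RHS]mxE; apply/eqP/negbNE/h.
rewrite /qf mulmx1 mxE (bigD1 j) //= -[X in X < _](addr0 0) ltr_leD //.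
  by rewrite !mxE mul_conjC_gt0.
by apply: sumr_ge0 => i _; rewrite !mxE mul_conjC_ge0.
Qed.


Lemma main_la n m p (D : 'M[R]_n) (M : 'M[R]_m) (LT : 'M[R]_(m, n)) (E : 'M[R]_(p, n)) :
  D^T = D -> M^T = M -> LT *m D *m LT^T = M -> E *m D = (-4) *: E -> LT *m E^T = 0 ->
  \rank LT = m -> \rank E = p -> n = (m + p)%N ->
  nuC D = (nuC M + p)%N.
Proof.
move=> sD sM hLDL hED hLE rL rE hn.
set Lc := map_mx phi LT; set Ec := map_mx phi E.
have DE : D *m E^T = (-4) *: E^T by rewrite -[D]sD -trmx_mul hED linearZ.
have LDE : LT *m D *m E^T = 0 by rewrite -mulmxA DE -scalemxAr hLE scaler0.
have EDL : E *m D *m LT^T = 0.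
  by rewrite hED -scalemxAl -[E *m LT^T]trmxK trmx_mul trmxK hLE trmx0 scaler0.
have cross1 u v : bil (map_mx phi D) (u *m Lc) (v *m Ec) = 0.
  by rewrite bil_congr LDE map_mx0 /bil mulmx0 mul0mx mxE.
have cross2 u v : bil (map_mx phi D) (v *m Ec) (u *m Lc) = 0.
  by rewrite bil_congr EDL map_mx0 /bil mulmx0 mul0mx mxE.
have qfL u : qf (map_mx phi D) (u *m Lc) = qf (map_mx phi M) u.
  by rewrite qf_bil bil_congr hLDL.
have qfE v : qf (map_mx phi D) (v *m Ec) = -4 * qf 1%:M (v *m Ec).
  rewrite !qf_bil bil_congr -(map_mx1 phi) bil_congr mulmx1 hED -scalemxAl.
  by rewrite map_mxZ bilZ rmorphN rmorph_nat.
have rfL : row_free Lc by rewrite /row_free mxrank_map rL.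
have rEc : \rank Ec = p by rewrite mxrank_map.
have m4 : (-4 : C) < 0 by rewrite oppr_lt0 ltr0n.
have nMm := nuC_le M; have nDn := nuC_le D.
apply/eqP; rewrite eqn_leq; apply/andP; split; last first.
  have [m' [N hN rN]] := nuC_neg_ex sM.
  pose W := (N *m Lc + Ec)%MS.
  have negW : negdef (map_mx phi D) W.
    move=> x /sub_addsmxP [[a b] /= ->] xn0.
    rewrite mulmxA bilD qfL qfE cross1 cross2 !addr0.
    case: (eqVneq (a *m N) 0) => [u0|un0].
      rewrite u0; move: xn0; rewrite mulmxA u0 mul0mx add0r => xn0.
      rewrite /qf !mul0mx mxE add0r nmulr_rlt0 //.
      by apply: qf1_gt0.
    rewrite -[X in _ < X](addr0 0) ltr_leD //; first exact: hN (submxMl _ _) un0.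
    by rewrite nmulr_rle0 // qf1_ge0.
  have capW : (N *m Lc :&: Ec)%MS == 0.
    apply/rowV0P => v vin.
    have vL := submx_trans vin (capmxSl _ _); have vE := submx_trans vin (capmxSr _ _).
    move: vL vE => /submxP [a ha] /submxP [b hb].
    have q0 : qf (map_mx phi D) v = 0.
      by rewrite qf_bil {1}ha {1}hb mulmxA cross1.
    move: q0; rewrite {1}hb qfE -hb => /eqP; rewrite mulf_eq0 => /orP [|].
      by move=> h; move: m4; rewrite (eqP h) ltxx.
    by move=> h; apply/eqP; apply: contraTT h => vn0; rewrite gt_eqF // qf1_gt0.
  have := nuC_negdef_le sD negW.
  have := mxrank_sum_cap (N *m Lc) Ec; rewrite (eqP capW) mxrank0 addn0.
  rewrite mxrankMfree // rEc => ->.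
  by move: rN; move: (\rank N) => a; lia.
have [m' [P hP rP]] := nuC_nonneg_ex sM.
have nnS : nonneg (map_mx phi D) (P *m Lc).
  by move=> x /submxP [a ->]; rewrite mulmxA qfL; apply: hP; apply: submxMl.
have := nuC_nonneg_le sD nnS; rewrite mxrankMfree //.
by move: rP; move: (\rank P) => a; lia.
Qed.

End RealC.

Lemma walkbP (T : finType) (e : rel T) (x y : T) n :
  reflect (exists p : seq T, [/\ size p = n, path e x p & last x p = y]) (walkb e x y n).
Proof.
apply: (iffP existsP) => [[p /andP [hp /eqP hl]] | [p [sp hp hl]]].
  by exists p; rewrite size_tuple.
have sp' : size p == n by rewrite sp.
by exists (Tuple sp'); rewrite /= hp hl eqxx.
Qed.

Section Walks.
Variable T : finType.
Implicit Types (e : rel T) (x y : T).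

Lemma walkb_hom (T' : finType) e (e' : rel T') (f : T -> T') x y n :
  {homo f : a b / e a b >-> e' a b} -> walkb e x y n -> walkb e' (f x) (f y) n.
Proof.
move=> hf /walkbP [p [sp hp hl]]; apply/walkbP; exists (map f p).
by rewrite size_map last_map hl (homo_path hf hp).
Qed.

Lemma walkb_sym e x y n : symmetric e -> walkb e x y n -> walkb e y x n.
Proof.
move=> es /walkbP [p [sp hp hl]]; apply/walkbP; exists (rev (belast x p)).
split; first by rewrite size_rev size_belast.
  by rewrite -hl rev_path (@eq_path _ (fun z => e^~ z) e) // => a b /=; apply: es.
case: p sp hp hl => [|c p] _ _ /= hl; first by rewrite hl.
rewrite rev_cons last_rcons //.
Qed.

Lemma gdist_sym e x y : symmetric e -> gdist e x y = gdist e y x.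
Proof.
move=> es; rewrite /gdist; apply: eq_find => n.
by apply/idP/idP; apply: walkb_sym.
Qed.

Lemma gdist_refl e x : gdist e x x = 0%N.
Proof.
rewrite /gdist; have : (0 < #|T|)%N by apply/card_gt0P; exists x.
case: #|{: T}| => // N _ /=.
by have -> : walkb e x x 0 by apply/walkbP; exists [::].
Qed.

Lemma conn_walk e x y : connect e x y -> exists2 n, (n < #|T|)%N & walkb e x y n.
Proof.
move=> /connectP [p hp ->]; case/shortenP: hp => p' hp' up' _.
exists (size p'); last by apply/walkbP; exists p'.
have := max_card (mem (x :: p')); rewrite (card_uniqP up') /=; lia.
Qed.

Lemma gdist_same (T' : finType) e (e' : rel T') x y (x' y' : T') :
  (forall n, walkb e x y n = walkb e' x' y' n) -> (#|T| <= #|T'|)%N ->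
  (exists2 n, (n < #|T|)%N & walkb e x y n) -> gdist e x y = gdist e' x' y'.
Proof.
move=> hw hc [n0 hn0 hw0]; rewrite /gdist -(eq_find hw) -(subnKC hc) iotaD find_cat.
by have -> : has (walkb e x y) (iota 0 #|T|) by apply/hasP; exists n0; rewrite // mem_iota.
Qed.
End Walks.

Section Graph.
Variables (V : finType) (e : rel V) (w : V) (k : nat).
Hypotheses (e_sym : symmetric e) (e_conn : connected_graph e) (hk : (2 <= k)%N).
Local Notation T := (V + 'I_k)%type.
Local Notation T1 := (V + 'I_1)%type.
Local Notation ek := (add_pendants e w k).
Local Notation e1 := (add_pendants e w 1).

Definition colp (a : T) : T1 := match a with inl v => inl v | inr _ => inr ord0 end.
Definition lifp (i : 'I_k) (a : T1) : T := match a with inl v => inl v | inr _ => inr i end.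

Lemma hom_col : {homo colp : a b / ek a b >-> e1 a b}.
Proof. by case=> [u|i] [v|j]. Qed.

Lemma hom_lif i : {homo lifp i : a b / e1 a b >-> ek a b}.
Proof. by case=> [u|i'] [v|j]. Qed.

Lemma ek_sym n : symmetric (add_pendants e w n).
Proof. by case=> [u|i] [v|j] //=; rewrite e_sym. Qed.

Lemma conn1 (x y : T1) : connect e1 x y.
Proof.
have hl u v : connect e1 (inl u) (inl v).
  have /connectP [p hp ->] := e_conn u v.
  apply/connectP; exists (map inl p); last by rewrite last_map.
  by move: hp; apply: homo_path.
have hr u : connect e1 (inl u) (inr ord0).
  apply: connect_trans (hl u w) _; apply: connect1; by rewrite /= eqxx.
have hr' u : connect e1 (inr ord0) (inl u).
  apply: connect_trans _ (hl w u); apply: connect1; by rewrite /= eqxx.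
case: x y => [u|i] [v|j]; rewrite ?(ord1 i) ?(ord1 j) //.
Qed.

Lemma cardT1T : (#|{: T1}| <= #|{: T}|)%N.
Proof. by rewrite !card_sum !card_ord leq_add2l; lia. Qed.

Lemma D1 (a b : T) : (forall i j, a = inr i -> b = inr j -> i = j) ->
  gdist ek a b = gdist e1 (colp a) (colp b).
Proof.
move=> hab; symmetry; apply: gdist_same cardT1T (conn_walk (conn1 _ _)) => n.
have k0 : (0 < k)%N by lia.
have [i ha hb] : exists2 i, lifp i (colp a) = a & lifp i (colp b) = b.
  case: a hab => [u|i'] hab; case: b hab => [v|j] hab.
  - by exists (Ordinal k0).
  - by exists j.
  - by exists i'.
  - by exists i'; rewrite //= (hab i' j).
apply/idP/idP; last exact: walkb_hom hom_col.
by move=> /(walkb_hom (hom_lif i)); rewrite ha hb.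
Qed.

Lemma D2 (i j : 'I_k) : i != j -> gdist ek (inr i) (inr j) = 2%N.
Proof.
move=> ij; rewrite /gdist.
have : (3 <= #|{: T}|)%N.
  rewrite card_sum card_ord; have : (0 < #|V|)%N by apply/card_gt0P; exists w.
  lia.
case: #|{: T}| => [|[|[|N]]] // _ /=.
have -> : walkb ek (inr i) (inr j) 0 = false.
  by apply/negbTE/negP => /walkbP [[|c p] [//= _ _ []] /eqP]; rewrite (negbTE ij).
have -> : walkb ek (inr i) (inr j) 1 = false.
  apply/negbTE/negP => /walkbP [[|c [|c' p]] [] //= _].
  by case: c => [v|j'] //= _ ->.
have -> // : walkb ek (inr i) (inr j) 2.
by apply/walkbP; exists [:: inl w; inr j]; rewrite /= !eqxx.
Qed.

End Graph.

Section Emx.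
Variable R : comNzRingType.

Definition emx (T1 T2 : finType) (f : T1 -> T2 -> R) : 'M[R]_(#|T1|, #|T2|) :=
  \matrix_(i, j) f (enum_val i) (enum_val j).

Lemma sum_enum (T : finType) (F : T -> R) : \sum_(i < #|T|) F (enum_val i) = \sum_t F t.
Proof.
rewrite [RHS](reindex (fun i : 'I_#|T| => enum_val i)) //; exists enum_rank => x _.
  exact: enum_valK.
exact: enum_rankK.
Qed.

Lemma emx_mul (T1 T2 T3 : finType) (f : T1 -> T2 -> R) (g : T2 -> T3 -> R) :
  emx f *m emx g = emx (fun a c => \sum_b f a b * g b c).
Proof.
apply/matrixP => i j; rewrite !mxE -(sum_enum (fun b => f _ b * g b _)).
by apply: eq_bigr => l _; rewrite !mxE.
Qed.

Lemma emx_tr (T1 T2 : finType) (f : T1 -> T2 -> R) : (emx f)^T = emx (fun a b => f b a).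
Proof. by apply/matrixP => i j; rewrite !mxE. Qed.

Lemma emx1 (T : finType) : (1%:M : 'M[R]_#|T|) = emx (fun a b : T => (a == b)%:R).
Proof. by apply/matrixP => i j; rewrite !mxE (inj_eq enum_val_inj). Qed.

Lemma emx_ext (T1 T2 : finType) (f g : T1 -> T2 -> R) : f =2 g -> emx f = emx g.
Proof. by move=> h; apply/matrixP => i j; rewrite !mxE h. Qed.

Lemma emxZ (T1 T2 : finType) (f : T1 -> T2 -> R) c : c *: emx f = emx (fun a b => c * f a b).
Proof. by apply/matrixP => i j; rewrite !mxE. Qed.

Lemma emxD (T1 T2 : finType) (f g : T1 -> T2 -> R) : emx f + emx g = emx (fun a b => f a b + g a b).
Proof. by apply/matrixP => i j; rewrite !mxE. Qed.
End Emx.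

Lemma sum_pick (R : comNzRingType) (T : finType) (x : T) (F : T -> R) :
  \sum_y (x == y)%:R * F y = F x.
Proof.
rewrite (bigD1 x) //= eqxx mul1r big1 ?addr0 // => y /negPf hy.
by rewrite eq_sym hy mul0r.
Qed.

Section Main.
Variables (R : rcfType) (V : finType) (e : rel V) (w : V) (k : nat).
Hypotheses (e_sym : symmetric e) (e_conn : connected_graph e) (hk : (2 <= k)%N).
Local Notation T := (V + 'I_k)%type.
Local Notation T1 := (V + 'I_1)%type.
Local Notation ek := (add_pendants e w k).
Local Notation e1 := (add_pendants e w 1).
Local Notation dk := (gdist ek).
Local Notation d1 := (gdist e1).

Let k0 : (0 < k)%N. Proof. lia. Qed.
Let kR : k%:R != 0 :> R. Proof. by rewrite pnatr_eq0; lia. Qed.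
Let lkP : (k.-1 < k)%N. Proof. by rewrite ltn_predL. Qed.
Definition lk : 'I_k := Ordinal lkP.
Definition wr (r : 'I_k.-1) : 'I_k := widen_ord (leq_pred k) r.

Definition lc (a : T1) (b : T) : R :=
  match a, b with
  | inl u, inl v => (u == v)%:R
  | inr _, inr _ => k%:R^-1
  | _, _ => 0 end.
Definition ec (r : 'I_k.-1) (b : T) : R :=
  match b with inr i => (wr r == i)%:R - (lk == i)%:R | inl _ => 0 end.
Definition xc (s : T) (b : T1) : R :=
  match s, b with
  | inl v, inl u => (v == u)%:R
  | inr i, inr _ => (Ordinal k0 == i)%:R * k%:R
  | _, _ => 0 end.
Definition yc (s : T) (r : 'I_k.-1) : R :=
  match s with inr i => (wr r == i)%:R | inl _ => 0 end.

Definition dsq (n : nat) : R := (n ^ 2)%:R.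

Lemma dk_ll u v : dk (inl u) (inl v) = d1 (inl u) (inl v).
Proof. by rewrite D1. Qed.
Lemma dk_lr u j : dk (inl u) (inr j) = d1 (inl u) (inr ord0).
Proof. by rewrite D1. Qed.
Lemma dk_rl i v : dk (inr i) (inl v) = d1 (inr ord0) (inl v).
Proof. by rewrite D1. Qed.
Lemma dk_rr i j : dsq (dk (inr i) (inr j)) = (i != j)%:R * 4.
Proof.
case: (eqVneq i j) => [->|ij]; first by rewrite gdist_refl mul0r.
by rewrite D2 // mul1r.
Qed.

Lemma sum_lc_inl u (G : T -> R) : \sum_s lc (inl u) s * G s = G (inl u).
Proof.
rewrite big_sumType /= [X in _ + X]big1 ?addr0 ?sum_pick // => i _.
by rewrite mul0r.
Qed.

Lemma sum_lc_inr z (G : T -> R) : \sum_s lc (inr z) s * G s = k%:R^-1 * \sum_i G (inr i).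
Proof.
rewrite big_sumType /= big1 ?add0r ?mulr_sumr // => i _.
by rewrite mul0r.
Qed.

Lemma sum_ec r (G : T -> R) : \sum_s ec r s * G s = G (inr (wr r)) - G (inr lk).
Proof.
rewrite big_sumType /= big1 ?add0r; last by move=> i _; rewrite mul0r.
under eq_bigr => i _ do rewrite mulrBl.
by rewrite sumrB !(sum_pick _ (fun i => G (inr i))).
Qed.


Lemma sum_ind (x : 'I_k) : \sum_(i < k) (x == i)%:R = 1 :> R.
Proof. by have := sum_pick x (fun _ => 1 : R); under eq_bigr do rewrite mulr1. Qed.

Lemma sum_neq (x : 'I_k) : \sum_(i < k) (i != x)%:R * 4 = (k.-1)%:R * 4 :> R.
Proof.
rewrite -mulr_suml; congr (_ * _).
have -> : \sum_(i < k) (i != x)%:R = \sum_(i < k) (1 - (x == i)%:R) :> R.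
  by apply: eq_bigr => i _; rewrite eq_sym; case: (x == i); rewrite /= ?subrr ?subr0.
rewrite sumrB sum_ind sumr_const card_ord -subn1 natrB //; lia.
Qed.

Local Notation c := (4 - 4 / k%:R : R).

Lemma inl_inr (v : V) (z : 'I_1) : (inl v == inr z :> T1) = false.
Proof. by apply/eqP. Qed.
Lemma natb0 : (false%:R : R) = 0. Proof. by []. Qed.
Lemma natb1 : (true%:R : R) = 1. Proof. by []. Qed.

Lemma F1 a b : \sum_t (\sum_s lc a s * dsq (dk s t)) * lc b t =
  dsq (d1 a b) + c * ((a == inr ord0) && (b == inr ord0))%:R.
Proof.
under eq_bigr => t _ do rewrite mulrC.
case: b => [v|z]; [rewrite sum_lc_inl | rewrite sum_lc_inr];
  case: a => [u|z']; rewrite ?sum_lc_inl ?sum_lc_inr ?inl_inr ?andbF ?andFb ?natb0 ?mulr0 ?addr0.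
- by rewrite dk_ll.
- rewrite (ord1 z').
  under eq_bigr do rewrite dk_rl.
  rewrite sumr_const card_ord -mulr_natr; field; exact: kR.
- under eq_bigr do rewrite sum_lc_inl dk_lr.
  rewrite (ord1 z) sumr_const card_ord -[_ *+ k]mulr_natr; field; exact: kR.
- have d0 : dsq 0 = 0 by rewrite /dsq.
  rewrite (ord1 z) (ord1 z') eqxx gdist_refl d0 add0r natb1 mulr1.
  under eq_bigr do rewrite sum_lc_inr.
  under eq_bigr => i _ do under eq_bigr => j _ do rewrite dk_rr.
  under eq_bigr => i _ do rewrite sum_neq.
  rewrite sumr_const card_ord -mulr_natr.
  have hk1 : (k.-1)%:R = k%:R - 1 :> R by rewrite -subn1 natrB //; lia.
  rewrite hk1; field; exact: kR.
Qed.

Lemma F2 r b : \sum_s ec r s * dsq (dk s b) = -4 * ec r b.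
Proof.
rewrite sum_ec; case: b => [v|j] /=.
  by rewrite !dk_rl subrr mulr0.
rewrite !dk_rr; case: (wr r == j); case: (lk == j) => /=; ring.
Qed.

Lemma F3 a r : \sum_s lc a s * ec r s = 0.
Proof.
case: a => [u|z]; first by rewrite sum_lc_inl.
by rewrite sum_lc_inr /= sumrB !sum_ind subrr mulr0.
Qed.

Lemma F4 a b : \sum_s lc a s * xc s b = (a == b)%:R.
Proof.
case: a => [u|z]; first by rewrite sum_lc_inl; case: b.
rewrite sum_lc_inr; case: b => [v|z'] /=.
  by rewrite big1 ?mulr0.
by rewrite -mulr_suml sum_ind mul1r mulVf // (ord1 z) (ord1 z') eqxx.
Qed.

Lemma F5 r r' : \sum_s ec r s * yc s r' = (r == r')%:R.
Proof.
rewrite sum_ec /=.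
have -> : (wr r' == lk) = false.
  by apply/negbTE; rewrite -val_eqE /= neq_ltn ltn_ord.
have -> : (wr r' == wr r) = (r == r') by rewrite -val_eqE /= eq_sym.
by rewrite subr0.
Qed.


Lemma main_thm : let ekv : 'cV[R]_#|{: T1}| := delta_mx (enum_rank (inr ord0)) ord0 in
  neg_inertia (dsq_mx R ek)
  = (k - 1 + neg_inertia (dsq_mx R e1 + (4 - 4 / k%:R) *: (ekv *m ekv^T)))%N.
Proof.
move=> ekv.
set D := dsq_mx R ek; set M := (_ + _)%R.
have hD : D = emx (fun a b => dsq (dk a b)) by [].
have hek : ekv *m ekv^T = emx (fun a b : T1 => ((a == inr ord0) && (b == inr ord0))%:R).
  rewrite trmx_delta mul_delta_mx; apply/matrixP => i j; rewrite !mxE.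
  by rewrite -!(inj_eq enum_val_inj) !enum_rankK.
have hM : M = emx (fun a b => dsq (d1 a b) + c * ((a == inr ord0) && (b == inr ord0))%:R).
  by rewrite /M hek emxZ -[dsq_mx R e1]/(emx (fun a b => dsq (d1 a b))) emxD.
pose LT := emx lc; pose E := emx ec.
have hLDL : LT *m D *m LT^T = M.
  by rewrite hM hD emx_tr !emx_mul; apply: emx_ext => a b; rewrite F1.
have hED : E *m D = -4 *: E.
  by rewrite hD emx_mul emxZ; apply: emx_ext => r b; rewrite F2.
have hLE : LT *m E^T = 0.
  by rewrite emx_tr emx_mul; apply/matrixP => i j; rewrite !mxE F3.
have rL : \rank LT = #|{: T1}|.
  apply/eqP; rewrite eqn_leq rank_leq_row /=.
  apply: (mulmx1_min_rank (M:=1%:M) (N:=emx xc)).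
  by rewrite mul1mx emx_mul emx1; apply: emx_ext => a b; exact: F4.
have rE : \rank E = #|'I_k.-1|.
  apply/eqP; rewrite eqn_leq rank_leq_row /=.
  apply: (mulmx1_min_rank (M:=1%:M) (N:=emx yc)).
  by rewrite mul1mx emx_mul emx1; apply: emx_ext => a b; exact: F5.
have sD : D^T = D.
  by rewrite hD emx_tr; apply: emx_ext => a b; rewrite gdist_sym //; apply: ek_sym.
have sM : M^T = M by rewrite -hLDL !trmx_mul trmxK sD !mulmxA.
have hn : #|{: T}| = (#|{: T1}| + #|'I_k.-1|)%N by rewrite !card_sum !card_ord; lia.
have := main_la sD sM hLDL hED hLE rL rE hn.
rewrite !neg_inertia_nuC // card_ord => ->; lia.
Qed.

End Main.

Theorem proposition3p1 (R : rcfType) (V : finType) (e : rel V) (w : V) (k : nat)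
  (e_sym : symmetric e) (e_irr : irreflexive e) (e_conn : connected_graph e)
  (hk : (2 <= k)%N) :
  let ek : 'cV[R]_#|{: (V + 'I_1)%type}| := delta_mx (enum_rank (inr ord0)) ord0 in
  neg_inertia (dsq_mx R (add_pendants e w k))
  = (k - 1 + neg_inertia (dsq_mx R (add_pendants e w 1)
                          + (4 - 4 / k%:R) *: (ek *m ek^T)))%N.
Proof. exact: (@main_thm R V e w k e_sym e_conn hk). Qed.
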